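(* Let $k$ be a field. In the abelian category $\mathrm{Fun}^c(\mathbb R^n,\mathrm{Mod}_k)$ of upper semi-continuous persistence modules over $\mathbb R^n$ (componentwise order), the indecomposable injective objects are, up to isomorphism, exactly the indicator modules $k[D]$ where $D\subseteq\mathbb R^n$ is an upward-directed down-set open in the standard topology, and distinct such $D$ give non-isomorphic objects; thus they are in one-to-one correspondence with such down-sets.
   Context: In $\mathbb R^n$ with componentwise order, $x\ll y$ means $x_i<y_i$ for all $i$. A set is upward-directed if nonempty and any two elements have an upper bound in it. Persistence modules over $\mathbb R^n$ are functors from $\mathbb R^n$ (as a category, $p\to q$ iff $p\le q$) to $k$-vector spaces. $k[D]$ is the indicator module: $k$ on $D$, $0$ elsewhere, identity maps within $D$, zero otherwise. $\underline M_p=\varprojlim_{x\gg p}M_x$; $M$ is upper semi-continuous if the canonical morphism $M\to\underline M$ is an isomorphism; $\mathrm{Fun}^c(\mathbb R^n,\mathrm{Mod}_k)$ is the full subcategory of such modules (it is abelian, being equivalent to the category of sheaves on $\mathbb R^n$ with the Scott topology). *)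

(* Defs.v *)
From HB Require Import structures.
From mathcomp Require Import all_boot all_order all_algebra.
From mathcomp Require Import all_classical all_reals topology normedtype.
Set Implicit Arguments. Unset Strict Implicit. Unset Printing Implicit Defensive.
Import Order.TTheory GRing.Theory Num.Theory.
Import numFieldNormedType.Exports.
Local Open Scope classical_set_scope.
Local Open Scope ring_scope.

(* Points of R^n are row vectors 'rV[R]_n with the standard (product) topology. *)
Section PersistenceModules.
Variables (R : realType) (n : nat) (k : fieldType).

Local Notation pt := 'rV[R]_n.

Definition ple (x y : pt) : Prop := forall i, x ord0 i <= y ord0 i.
Definition pll (x y : pt) : Prop := forall i, x ord0 i < y ord0 i.

Definition updirected (D : set pt) : Prop :=
  (exists x, D x) /\
  forall x y, D x -> D y -> exists z, [/\ D z, ple x z & ple y z].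
Definition downset (D : set pt) : Prop :=
  forall x y, D x -> ple y x -> D y.

(* Data of a persistence module: a k-vector space at each point and maps
   pmap p q : M_p -> M_q (only the values for p <= q matter). *)
Record pmod := PMod {
  pV : pt -> lmodType k;
  pmap : forall p q : pt, pV p -> pV q }.
Arguments pmap : clear implicits.

Definition is_pmod (M : pmod) : Prop :=
  [/\ (forall p q, ple p q -> forall (a : k) (u v : pV M p),
          pmap M p q (a *: u + v) = a *: pmap M p q u + pmap M p q v),
      (forall p (v : pV M p), pmap M p p v = v) &
      (forall p q r, ple p q -> ple q r -> forall v : pV M p,
          pmap M p r v = pmap M q r (pmap M p q v))].

Definition hom (M N : pmod) := forall p, pV M p -> pV N p.

Definition is_hom (M N : pmod) (f : hom M N) : Prop :=
  (forall p (a : k) (u v : pV M p), f p (a *: u + v) = a *: f p u + f p v) /\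
  (forall p q, ple p q -> forall v : pV M p, f q (pmap M p q v) = pmap N p q (f p v)).

Definition hcomp (A B C : pmod) (g : hom B C) (f : hom A B) : hom A C :=
  fun p v => g p (f p v).
Definition hid (A : pmod) : hom A A := fun p v => v.
Definition hzero (A B : pmod) : hom A B := fun p _ => 0.
Definition hadd (A B : pmod) (f g : hom A B) : hom A B := fun p v => f p v + g p v.
Definition heq (A B : pmod) (f g : hom A B) : Prop := forall p v, f p v = g p v.

(* upper semi-continuity: the canonical map M_p -> lim_{x >> p} M_x is bijective,
   i.e. every compatible family (m_x)_{x >> p} comes from a unique m in M_p. *)
Definition usc (M : pmod) : Prop :=
  forall (p : pt) (m : forall x : pt, pV M x),
    (forall x y, pll p x -> ple x y -> pmap M x y (m x) = m y) ->
    (exists v : pV M p, forall x, pll p x -> pmap M p x v = m x) /\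
    (forall v w : pV M p,
       (forall x, pll p x -> pmap M p x v = m x) ->
       (forall x, pll p x -> pmap M p x w = m x) -> v = w).

Definition obj (M : pmod) : Prop := is_pmod M /\ usc M.

Definition is_zero (M : pmod) : Prop := forall p (v : pV M p), v = 0.

Definition mono (A B : pmod) (f : hom A B) : Prop :=
  forall (C : pmod) (g h : hom C A), obj C -> is_hom g -> is_hom h ->
    heq (hcomp f g) (hcomp f h) -> heq g h.

Definition injective_obj (I : pmod) : Prop :=
  forall (A B : pmod) (f : hom A B) (g : hom A I),
    obj A -> obj B -> is_hom f -> mono f -> is_hom g ->
    exists h : hom B I, is_hom h /\ heq (hcomp h f) g.

Definition biproduct (I A B : pmod) : Prop :=
  exists (i1 : hom A I) (i2 : hom B I) (p1 : hom I A) (p2 : hom I B),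
    [/\ is_hom i1, is_hom i2, is_hom p1 & is_hom p2] /\
    [/\ heq (hcomp p1 i1) (@hid A), heq (hcomp p2 i2) (@hid B),
        heq (hcomp p1 i2) (@hzero B A), heq (hcomp p2 i1) (@hzero A B) &
        heq (hadd (hcomp i1 p1) (hcomp i2 p2)) (@hid I)].

Definition indecomposable (I : pmod) : Prop :=
  ~ is_zero I /\
  forall A B : pmod, obj A -> obj B -> biproduct I A B -> is_zero A \/ is_zero B.

Definition iso (M N : pmod) : Prop :=
  exists (f : hom M N) (g : hom N M),
    [/\ is_hom f, is_hom g, heq (hcomp g f) (@hid M) & heq (hcomp f g) (@hid N)].

Definition indec_injective (M : pmod) : Prop :=
  [/\ obj M, injective_obj M & indecomposable M].

(* indicator module k[D]: k (as 'rV[k]_1) on D, 0 (as 'rV[k]_0) elsewhere;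
   the map is the identity between points of D and zero otherwise. *)
Definition indV (D : set pt) (p : pt) : lmodType k :=
  'rV[k]_(nat_of_bool (asbool (D p))).

Definition indicator (D : set pt) : pmod :=
  @PMod (indV D) (fun p q (v : indV D p) =>
     \row_(j < nat_of_bool (asbool (D q))) \sum_(i < nat_of_bool (asbool (D p))) v ord0 i).

End PersistenceModules.

(* Main.v *)
Require Import Defs.
From HB Require Import structures.
From mathcomp Require Import all_boot all_order all_algebra.
From mathcomp Require Import all_classical all_reals topology normedtype.
From mathcomp Require Import lra ring.
Set Implicit Arguments. Unset Strict Implicit. Unset Printing Implicit Defensive.
Import Order.TTheory GRing.Theory Num.Theory.
Import numFieldNormedType.Exports.
Local Open Scope classical_set_scope.
Local Open Scope ring_scope.

Section Ent.
Variable k : fieldType.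
Definition ent (b : nat) (v : 'rV[k]_b) : k := \sum_(i < b) v ord0 i.
Definition mk (b : nat) (c : k) : 'rV[k]_b := \row_(j < b) c.

Lemma entK (b : bool) (v : 'rV[k]_b) : mk b (ent v) = v.
Proof.
case: b v => v; apply/rowP => j; rewrite mxE /ent.
  by rewrite big_ord1; rewrite (ord1 j); congr (v _ _); apply/val_inj.
by case: j.
Qed.

Lemma mkK (b : bool) c : ent (mk b c) = if b then c else 0.
Proof. by case: b; rewrite /ent ?big_ord1 ?big_ord0 // mxE. Qed.

Lemma ent0 (v : 'rV[k]_false) : ent v = 0.
Proof. by rewrite /ent big_ord0. Qed.

Lemma rV0_eq (u v : 'rV[k]_false) : u = v.
Proof. by apply/rowP => -[]. Qed.

Lemma entL b a (u v : 'rV[k]_b) : ent (a *: u + v) = a * ent u + ent v.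
Proof.
rewrite /ent mulr_sumr -big_split /=; apply: eq_bigr => i _.
by rewrite !mxE.
Qed.

Lemma mkL b a c d : mk b (a * c + d) = a *: mk b c + mk b d.
Proof. by apply/rowP => j; rewrite !mxE. Qed.

Lemma ent_zero b : ent (0 : 'rV[k]_b) = 0.
Proof. by rewrite /ent big1 // => i _; rewrite mxE. Qed.

Lemma mk_zero b : mk b 0 = 0.
Proof. by apply/rowP => j; rewrite !mxE. Qed.

Lemma mk_inj (b : bool) c d : b -> mk b c = mk b d -> c = d.
Proof. by move=> hb /(congr1 (@ent b)); rewrite !mkK hb. Qed.
End Ent.
Section Ent2.
Variable k : fieldType.
Lemma entF (b : bool) (v : 'rV[k]_b) : b = false -> ent v = 0.
Proof. by move: v; case: b => // v _; apply: ent0. Qed.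
Lemma rVF (b : bool) (u v : 'rV[k]_b) : b = false -> u = v.
Proof. by move: u v; case: b => // u v _; apply: rV0_eq. Qed.
Lemma entT_inj (b : bool) (u v : 'rV[k]_b) : ent u = ent v -> u = v.
Proof. by move=> h; rewrite -(entK u) -(entK v) h. Qed.
End Ent2.
Lemma mkKT (k : fieldType) (b : bool) (c : k) : b -> ent (mk b c) = c.
Proof. by move=> hb; rewrite mkK hb. Qed.
Section Lin.
Variables (k : fieldType) (V W : lmodType k) (f : V -> W).
Hypothesis fL : forall a u v, f (a *: u + v) = a *: f u + f v.
Lemma lin0 : f 0 = 0.
Proof. have h := fL 1 0 0; rewrite !scale1r !addr0 in h.
by apply: (addrI (f 0)); rewrite addr0 -h. Qed.
Lemma linD u v : f (u + v) = f u + f v.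
Proof. by have := fL 1 u v; rewrite !scale1r. Qed.
Lemma linZ a u : f (a *: u) = a *: f u.
Proof. by have := fL a u 0; rewrite !addr0 lin0 addr0. Qed.
Lemma linN u : f (- u) = - f u.
Proof. by rewrite -scaleN1r linZ scaleN1r. Qed.
Lemma linB u v : f (u - v) = f u - f v.
Proof. by rewrite linD linN. Qed.
End Lin.

Notation pm M p q := (@Defs.pmap _ _ _ M p q).

Section Pts.
Variables (R : realType) (n : nat).
Local Notation pt := 'rV[R]_n.
Implicit Types x y z p : pt.

Definition pmin (x y : pt) : pt := \row_i Num.min (x ord0 i) (y ord0 i).
Definition pmax (x y : pt) : pt := \row_i Num.max (x ord0 i) (y ord0 i).
Definition shift (x : pt) (c : R) : pt := \row_i (x ord0 i + c).

Lemma ple_refl x : ple x x. Proof. by move=> i. Qed.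
Lemma ple_trans x y z : ple x y -> ple y z -> ple x z.
Proof. by move=> h1 h2 i; apply: le_trans (h1 i) (h2 i). Qed.
Lemma pll_ple x y : pll x y -> ple x y.
Proof. by move=> h i; apply: ltW. Qed.
Lemma pll_ple_trans x y z : pll x y -> ple y z -> pll x z.
Proof. by move=> h1 h2 i; apply: lt_le_trans (h1 i) (h2 i). Qed.
Lemma ple_pll_trans x y z : ple x y -> pll y z -> pll x z.
Proof. by move=> h1 h2 i; apply: le_lt_trans (h1 i) (h2 i). Qed.
Lemma pll_shift x c : 0 < c -> pll x (shift x c).
Proof. by move=> c0 i; rewrite mxE ltrDl. Qed.
Lemma pmin_l x y : ple (pmin x y) x.
Proof. by move=> i; rewrite mxE ge_min lexx. Qed.
Lemma pmin_r x y : ple (pmin x y) y.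
Proof. by move=> i; rewrite mxE ge_min lexx orbT. Qed.
Lemma pll_pmin p x y : pll p x -> pll p y -> pll p (pmin x y).
Proof. by move=> h1 h2 i; rewrite mxE lt_min h1 h2. Qed.
Lemma ple_pmin p x y : ple p x -> ple p y -> ple p (pmin x y).
Proof. by move=> h1 h2 i; rewrite mxE le_min h1 h2. Qed.
Lemma pmax_l x y : ple x (pmax x y).
Proof. by move=> i; rewrite mxE le_max lexx. Qed.
Lemma pmax_r x y : ple y (pmax x y).
Proof. by move=> i; rewrite mxE le_max lexx orbT. Qed.
Lemma exists_pll p : exists x, pll p x.
Proof. by exists (shift p 1); apply: pll_shift. Qed.

Lemma openP (D : set pt) x : open D -> D x ->
  exists2 e : R, 0 < e & forall y : pt, (forall i, `|x ord0 i - y ord0 i| < e) -> D y.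
Proof.
move=> oD Dx; have /nbhs_ballP [e e0 He] := oD x Dx.
exists e => // y Hy; apply: He; split => // i j.
by rewrite (ord1 i) -ball_normE /ball_ /=; apply: Hy.
Qed.

Lemma open_shift (D : set pt) x : open D -> D x -> exists2 e : R, 0 < e & D (shift x e).
Proof.
move=> oD Dx; have [e e0 He] := openP oD Dx.
exists (e / 2); first by rewrite divr_gt0.
apply: He => i; rewrite mxE opprD addrA subrr add0r normrN gtr0_norm ?divr_gt0 //.
by rewrite ltr_pdivrMr // ltr_pMr // ltr1n.
Qed.

Lemma open_pll (x : pt) : open [set y | pll y x].
Proof.
rewrite openE => y /= Hy; apply/nbhs_ballP.
exists (\big[Order.min/1]_(i < n) (x ord0 i - y ord0 i)).
  by apply: (big_ind (fun v => 0 < v)) => // [a b ha hb|i _]; rewrite ?lt_min ?ha ?hb // subr_gt0.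
move=> z [_ hz] i; have := hz ord0 i.
rewrite -ball_normE /ball_ /= => h.
have := lt_le_trans h (bigmin_le _ i _).
by rewrite ltr_distlC => /andP[_]; rewrite addrC subrK.
Qed.
End Pts.
Section Ind.
Variables (R : realType) (n : nat) (k : fieldType).
Local Notation pt := 'rV[R]_n.
Implicit Types x y z p q : pt.

Lemma ind_pmE (S : set pt) p q (v : pV (indicator k S) p) :
  pm (indicator k S) p q v = mk `[< S q >] (@ent k `[< S p >] v).
Proof. by []. Qed.

Definition convex (S : set pt) := forall p q r, ple p q -> ple q r -> S p -> S r -> S q.

Lemma ind_obj (S : set pt) : convex S ->
 (forall q, S q -> exists x, pll q x /\ S x) ->
 (forall q, ~ S q -> exists x', pll q x' /\ forall y, pll q y -> ple y x' -> ~ S y) ->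
 obj (indicator k S).
Proof.
move=> cS hA hB; split.
  split.
  - by move=> p q _ a u v; rewrite !ind_pmE entL mkL.
  - by move=> p v; rewrite ind_pmE entK.
  move=> p q r hpq hqr v; rewrite !ind_pmE mkK.
  have [hq|hq] := pselect (S q); first by rewrite (asboolT hq).
  have [hp|hp] := pselect (S p); last by rewrite (@entF k `[< S p >] v (asboolF hp)) if_same.
  have [hr|hr] := pselect (S r); first by case: hq; apply: cS hpq hqr hp hr.
  by apply: rVF; apply: asboolF.
move=> p m hm.
have [hp|hp] := pselect (S p).
  have [x0 [px0 Sx0]] := hA p hp.
  have key : forall x, pll p x -> m x = mk _ (ent (m x0)).
    move=> x px; set y := pmin x x0.
    have py : pll p y by apply: pll_pmin.
    have Sy : S y by apply: (cS p y x0) => //; [apply: pll_ple|apply: pmin_r].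
    have e1 := hm _ _ py (pmin_l x x0); have e2 := hm _ _ py (pmin_r x x0).
    rewrite ind_pmE in e1 e2.
    by rewrite -e1 -e2 mkK (asboolT Sx0).
  split.
    exists (mk _ (ent (m x0))) => x px; rewrite ind_pmE mkK (asboolT hp).
    by rewrite (key x px).
  move=> v w hv hw; apply: entT_inj.
  have := hv _ px0; rewrite -(hw _ px0) !ind_pmE => /(congr1 (@ent _ _)).
  by rewrite !mkK (asboolT Sx0).
have [x' [px' hx']] := hB p hp.
have key : forall x, pll p x -> m x = 0.
  move=> x px; set y := pmin x x'.
  have py : pll p y by apply: pll_pmin.
  have nSy : ~ S y by apply: hx' => //; apply: pmin_r.
  have e1 := hm _ _ py (pmin_l x x'); rewrite ind_pmE in e1.
  by rewrite -e1 (entF _ (asboolF nSy)) mk_zero.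
split.
  by exists 0 => x px; rewrite ind_pmE ent_zero mk_zero key.
by move=> v w _ _; apply: rVF; apply: asboolF.
Qed.
End Ind.
Section Ind2.
Variables (R : realType) (n : nat) (k : fieldType).
Local Notation pt := 'rV[R]_n.
Implicit Types x y z p q : pt.

Lemma not_ple p q : ~ ple p q -> exists i, q ord0 i < p ord0 i.
Proof.
move=> h; apply: contrapT => h2; apply: h => i.
by rewrite leNgt; apply/negP => hi; apply: h2; exists i.
Qed.

Lemma ind_obj_cap (D : set pt) p : open D -> downset D ->
  obj (indicator k [set q | ple p q /\ D q]).
Proof.
move=> oD dD; apply: ind_obj.
- move=> a b c hab hbc [hpa _] [_ Dc]; split; first exact: ple_trans hpa hab.
  exact: dD Dc hbc.
- move=> q [hpq Dq]; have [e e0 De] := open_shift oD Dq.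
  exists (shift q e); split; first exact: pll_shift.
  by split => //; apply: ple_trans hpq (pll_ple (pll_shift q e0)).
move=> q hq; have [hpq|/not_ple [i hi]] := pselect (ple p q); last first.
  exists (\row_j (if j == i then (q ord0 i + p ord0 i) / 2 else q ord0 j + 1)); split.
    move=> j; rewrite mxE; case: eqP => [->|_]; last by rewrite ltrDl.
    by have [] := midf_lt hi.
  move=> y _ hy [hpy _]; have := hy i; rewrite mxE eqxx => h1.
  have := le_trans (hpy i) h1; have [_ h2] := midf_lt hi.
  by rewrite leNgt h2.
exists (shift q 1); split; first exact: pll_shift.
by move=> y hy _ [_ Dy]; apply: hq; split => //; apply: dD Dy (pll_ple hy).
Qed.

Lemma ind_obj_down (D : set pt) : open D -> downset D -> obj (indicator k D).
Proof.
move=> oD dD; apply: ind_obj.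
- by move=> a b c hab hbc _ Dc; apply: dD Dc hbc.
- move=> q Dq; have [e e0 De] := open_shift oD Dq.
  by exists (shift q e); split => //; apply: pll_shift.
move=> q nDq; exists (shift q 1); split; first exact: pll_shift.
by move=> y hy _ Dy; apply: nDq; apply: dD Dy (pll_ple hy).
Qed.

Lemma setT_open : open (@setT pt). Proof. exact: openT. Qed.
Lemma setT_down : downset (@setT pt). Proof. by []. Qed.
End Ind2.
Section Mono.
Variables (R : realType) (n : nat) (k : fieldType).
Local Notation pt := 'rV[R]_n.
Local Notation pmod := (pmod R n k).
Implicit Types x y z p q : pt.

Lemma mono_of_inj (A B : pmod) (f : Defs.hom A B) :
  (forall p u w, f p u = f p w -> u = w) -> mono f.
Proof. by move=> hi C g h _ _ _ e p v; apply: hi; apply: e. Qed.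

Lemma inj_of_mono (A B : pmod) (f : Defs.hom A B) : is_pmod A -> is_pmod B ->
  is_hom f -> mono f -> forall p u w, f p u = f p w -> u = w.
Proof.
move=> [Al Aid Acomp] [Bl _ _] [fl fn] hm p u w e.
have fv : f p (u - w) = 0 by rewrite (linB (fl p)) e subrr.
apply/eqP; rewrite -subr_eq0; apply/eqP; set v := u - w in fv *.
pose S := [set q | ple p q /\ @setT pt q].
pose g : Defs.hom (indicator k S) A := fun q c => @ent k `[< S q >] c *: pm A p q v.
pose h : Defs.hom (indicator k S) A := fun q c => 0.
have Sp : S p by split => //; apply: ple_refl.
have := hm _ g h (ind_obj_cap k p (@setT_open R n) (@setT_down R n)).
move=> /(_ _ _ _ p (mk _ 1)); rewrite /g /h mkK (asboolT Sp) scale1r Aid; apply.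
- split.
    by move=> q a c d; rewrite /g entL scalerDl scalerA.
  move=> q r hqr c; rewrite /g ind_pmE mkK.
  have [Sq|nSq] := pselect (S q).
    have Sr : S r by split => //; apply: ple_trans Sq.1 hqr.
    by rewrite (asboolT Sr) (linZ (Al _ _ hqr)) -Acomp //; case: Sq.
  by rewrite (@entF _ _ c (asboolF nSq)) if_same !scale0r (lin0 (Al _ _ hqr)).
- split; first by move=> q a c d; rewrite /h scaler0 addr0.
  by move=> q r hqr c; rewrite /h (lin0 (Al _ _ hqr)).
move=> q c; rewrite /hcomp /g /h.
have [Sq|nSq] := pselect (S q).
  by rewrite (linZ (fl q)) fn; [rewrite fv (lin0 (Bl _ _ Sq.1)) scaler0 (lin0 (fl q))|case: Sq].
by rewrite (@entF _ _ c (asboolF nSq)) scale0r.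
Qed.
End Mono.
Section Idem.
Variables (R : realType) (n : nat) (k : fieldType).
Local Notation pt := 'rV[R]_n.
Local Notation pmod := (pmod R n k).
Implicit Types x y z p q : pt.

Lemma hcomp_hom (A B C : pmod) (g : Defs.hom B C) (f : Defs.hom A B) :
  is_hom f -> is_hom g -> is_hom (hcomp g f).
Proof.
move=> [fl fn] [gl gn]; split.
  by move=> p a u v; rewrite /hcomp fl gl.
by move=> p q hpq v; rewrite /hcomp fn // gn.
Qed.

Definition idem_trivial (M : pmod) := forall e : Defs.hom M M, is_hom e ->
  heq (hcomp e e) e -> heq e (@hzero _ _ _ M M) \/ heq e (@hid _ _ _ M).

Lemma indec_of_idem (M : pmod) : ~ is_zero M -> idem_trivial M -> indecomposable M.
Proof.
move=> nz hid; split => // A B _ _ [i1 [i2 [p1 [p2 [[hi1 hi2 hp1 hp2] [e11 e22 e12 e21 esum]]]]]].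
have E11 : forall p a, p1 p (i1 p a) = a := e11.
have E22 : forall p a, p2 p (i2 p a) = a := e22.
have E21 : forall p a, p2 p (i1 p a) = 0 := e21.
have ES : forall p (w : pV M p), i1 p (p1 p w) + i2 p (p2 p w) = w := esum.
have := hid (hcomp i1 p1) (hcomp_hom hp1 hi1).
case.
- by move=> p x; rewrite /hcomp E11.
- move=> e0; left => p a.
  have e0' : forall p (w : pV M p), i1 p (p1 p w) = 0 := e0.
  have : i1 p a = 0.
    by have := ES p (i1 p a); rewrite e0' add0r E21 (lin0 (hi2.1 p)) => <-.
  by move=> h; rewrite -(E11 p a) h (lin0 (hp1.1 p)).
move=> e1; right => p b.
have e1' : forall p (w : pV M p), i1 p (p1 p w) = w := e1.
have h : i2 p b = 0.
  have := ES p (i2 p b); rewrite e1' E22.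
  by move=> /(congr1 (fun t => t - i2 p b)); rewrite addrK subrr.
by rewrite -(E22 p b) h (lin0 (hp2.1 p)).
Qed.

Lemma mk_scale (b : nat) (a : k) : mk b a = a *: mk b 1.
Proof. by apply/rowP => j; rewrite !mxE mulr1. Qed.

Lemma ind_scalar (D : set pt) (e : Defs.hom (indicator k D) (indicator k D)) :
  updirected D -> downset D -> is_hom e ->
  exists c : k, forall p (v : pV (indicator k D) p), e p v = c *: v.
Proof.
move=> [[x0 Dx0] dir] dD [el en].
pose cf p := @ent k `[< D p >] (e p (mk _ 1)).
have eE : forall p (v : pV (indicator k D) p), e p v = mk _ (cf p * @ent k `[< D p >] v).
  move=> p v; rewrite -{1}(entK v) mk_scale (linZ (el p)).
  by rewrite -(entK (e p (mk _ 1))) -/(cf p) mk_scale scalerA -mk_scale mulrC.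
have cup : forall p z, D p -> D z -> ple p z -> cf p = cf z.
  move=> p z Dp Dz hpz; rewrite /cf.
  have := en p z hpz (mk _ 1); rewrite !ind_pmE (mkKT _ (asboolT Dp)) => ->.
  by rewrite (mkKT _ (asboolT Dz)).
exists (cf x0) => p v.
have [Dp|nDp] := pselect (D p); last by apply: rVF; apply: asboolF.
have [z [Dz hpz hxz]] := dir p x0 Dp Dx0.
rewrite eE (cup _ _ Dp Dz hpz) -(cup _ _ Dx0 Dz hxz).
by rewrite -{2}(entK v) mk_scale [in RHS]mk_scale scalerA.
Qed.

Lemma ind_indec (D : set pt) : updirected D -> downset D -> indecomposable (indicator k D).
Proof.
move=> uD dD; have [[x0 Dx0] _] := uD; apply: indec_of_idem.
  move=> /(_ x0 (mk _ 1)) /(congr1 (@ent k `[< D x0 >])).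
  by rewrite (mkKT _ (asboolT Dx0)) ent_zero => /eqP; rewrite oner_eq0.
move=> e he ee; have [c hc] := ind_scalar uD dD he.
have cc : c * c = c.
  have := ee x0 (mk _ 1); rewrite /hcomp !hc scalerA => /(congr1 (@ent k `[< D x0 >])).
  by rewrite -!mk_scale !(mkKT _ (asboolT Dx0)).
have : c * (c - 1) = 0 by rewrite mulrBr mulr1 cc subrr.
move=> /eqP; rewrite mulf_eq0 subr_eq0 => /orP[/eqP c0|/eqP c1].
  by left => p v; rewrite hc c0 scale0r.
by right => p v; rewrite hc c1 scale1r.
Qed.
End Idem.
Section Part3.
Variables (R : realType) (n : nat) (k : fieldType).
Local Notation pt := 'rV[R]_n.

Lemma iso_sub (D1 D2 : set pt) : iso (indicator k D1) (indicator k D2) -> D1 `<=` D2.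
Proof.
move=> [f [g [hf hg gf fg]]] p D1p; apply: contrapT => nD2.
have e : f p (mk _ 1) = 0 by apply: rVF; apply: asboolF.
have := gf p (mk _ 1); rewrite /hcomp e (lin0 (hg.1 p)) /hid.
move=> /(congr1 (@ent k `[< D1 p >])); rewrite ent_zero (mkKT _ (asboolT D1p)).
by move=> /eqP; rewrite eq_sym oner_eq0.
Qed.

Lemma iso_sym (M N : pmod R n k) : iso M N -> iso N M.
Proof. by move=> [f [g [hf hg gf fg]]]; exists g, f. Qed.

Lemma part3 (D1 D2 : set pt) : iso (indicator k D1) (indicator k D2) -> D1 = D2.
Proof.
move=> h; apply/seteqP; split; first exact: iso_sub.
exact: iso_sub (iso_sym h).
Qed.
End Part3.
Section Inj.
Variables (R : realType) (n : nat) (k : fieldType).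
Local Notation pt := 'rV[R]_n.
Local Notation pmod := (pmod R n k).
Implicit Types x y z p q : pt.
Variables (D : set pt) (dD : downset D) (uD : updirected D).
Variables (A B : pmod) (pA : is_pmod A) (pB : is_pmod B).
Variables (f : Defs.hom A B) (g : Defs.hom A (indicator k D)).
Arguments f : clear implicits. Arguments g : clear implicits.
Hypotheses (hf : is_hom f) (hg : is_hom g).
Hypothesis finj : forall p u w, f p u = f p w -> u = w.

Record st := St { W : forall p, set (pV B p) ; phi : forall p, pV B p -> k }.
Arguments W : clear implicits. Arguments phi : clear implicits.
Definition gs p (a : pV A p) : k := @ent k `[< D p >] (g p a).

Definition good (s : st) :=
  [/\ (forall p, D p -> forall a u v, W s p u -> W s p v ->
          W s p (a *: u + v) /\ phi s p (a *: u + v) = a * phi s p u + phi s p v),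
      (forall p a, D p -> W s p (f p a) /\ phi s p (f p a) = gs a) &
      (forall p q, D q -> ple p q -> forall u, W s p u ->
          W s q (pm B p q u) /\ phi s q (pm B p q u) = phi s p u)].

Definition ST := {s : st | good s}.
Definition Rel (s t : ST) : bool :=
  `[< forall p u, W (sval s) p u -> W (sval t) p u /\ phi (sval t) p u = phi (sval s) p u >].

Lemma Rel_refl s : Rel s s. Proof. by apply/asboolP. Qed.
Lemma Rel_trans r s t : Rel r s -> Rel s t -> Rel r t.
Proof.
move=> /asboolP h1 /asboolP h2; apply/asboolP => p u /h1 [/h2 [h3 h4] h5].
by split => //; rewrite h4.
Qed.

Lemma gsL p a u v : gs (a *: u + v) = a * gs u + gs (p:=p) v.
Proof. by rewrite /gs hg.1 entL. Qed.

Lemma gsN p q (a : pV A p) : D q -> ple p q -> gs (pm A p q a) = gs a.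
Proof. by move=> Dq hpq; rewrite /gs hg.2 // ind_pmE (mkKT _ (asboolT Dq)). Qed.

Definition W0 p (u : pV B p) := D p /\ exists a, u = f p a.
Definition phi0 p (u : pV B p) : k :=
  match pselect (exists a, u = f p a) with
  | left h => gs (projT1 (cid h))
  | right _ => 0 end.
Lemma phi0E p a : phi0 (f p a) = gs a.
Proof.
rewrite /phi0; case: pselect => [h|[]]; last by exists a.
by case: (cid h) => a' /= /finj ->.
Qed.

Lemma good0 : good (St W0 phi0).
Proof.
split => /=.
- move=> p Dp a u v [_ [a1 ->]] [_ [a2 ->]].
  rewrite -hf.1; split; first by split => //; exists (a *: a1 + a2).
  by rewrite !phi0E gsL.
- by move=> p a Dp; split; [split => //; exists a|rewrite phi0E].
move=> p q Dq hpq u [Dp [a ->]]; rewrite -hf.2 //; split.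
  by split => //; exists (pm A p q a).
by rewrite !phi0E gsN.
Qed.

Definition t0 : ST := exist _ _ good0.
Section Chain.
Variable (C : set ST) (totC : total_on C (fun s t => Rel s t)) (s0 : ST) (Cs0 : C s0).

Definition Wu p (u : pV B p) := exists s, C s /\ W (sval s) p u.
Definition phiu p (u : pV B p) : k :=
  match pselect (exists s, C s /\ W (sval s) p u) with
  | left h => phi (sval (projT1 (cid h))) p u
  | right _ => 0 end.

Arguments Wu : clear implicits. Arguments phiu : clear implicits.
Lemma phiuE s p u : C s -> W (sval s) p u -> phiu p u = phi (sval s) p u.
Proof.
move=> Cs Ws; rewrite /phiu; case: pselect => [h|[]]; last by exists s.
case: (cid h) => s' [Cs' Ws'] /=.
have [/asboolP h1|/asboolP h1] := totC Cs Cs'; first by case: (h1 _ _ Ws).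
by case: (h1 _ _ Ws').
Qed.

Lemma two_in_one s1 s2 p u v : C s1 -> C s2 -> W (sval s1) p u -> W (sval s2) p v ->
  exists s, [/\ C s, W (sval s) p u & W (sval s) p v].
Proof.
move=> C1 C2 W1 W2; have [/asboolP h|/asboolP h] := totC C1 C2.
  by exists s2; split => //; case: (h _ _ W1).
by exists s1; split => //; case: (h _ _ W2).
Qed.

Lemma goodu : good (St Wu phiu).
Proof.
split => /=.
- move=> p Dp a u v [s1 [C1 W1]] [s2 [C2 W2]].
  have [s [Cs Wsu Wsv]] := two_in_one C1 C2 W1 W2.
  have [G2 _ _] := svalP s; have [h1 h2] := G2 p Dp a u v Wsu Wsv.
  split; first by exists s.
  by rewrite !(phiuE Cs) // h2.
- move=> p a Dp; have [_ G3 _] := svalP s0; have [h1 h2] := G3 p a Dp.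
  by split; [exists s0|rewrite (phiuE Cs0)].
move=> p q Dq hpq u [s [Cs Ws]]; have [_ _ G4] := svalP s.
have [h1 h2] := G4 p q Dq hpq u Ws.
by split; [exists s|rewrite !(phiuE Cs)].
Qed.

Lemma chain_ub : exists t : ST, forall s, C s -> Rel s t.
Proof.
exists (exist _ _ goodu) => s Cs; apply/asboolP => p u Wsu /=.
by split; [exists s|rewrite (phiuE Cs)].
Qed.
End Chain.

Lemma exists_max : exists m : ST, forall s, Rel m s -> Rel s m.
Proof.
have [||C totC|m hm] := @ZL_preorder ST t0 Rel.
- exact: Rel_refl.
- exact: Rel_trans.
- have [[s0 Cs0]|nC] := pselect (exists s, C s).
    exact: (@chain_ub C totC s0 Cs0).
  by exists t0 => s Cs; case: nC; exists s.
by exists m.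
Qed.
Section GoodFacts.
Variables (s : st) (gsd : good s).
Lemma gW0 q : D q -> W s q 0 /\ phi s q 0 = 0.
Proof.
move=> Dq; have [_ G3 _] := gsd; have [h1 h2] := G3 q 0 Dq.
rewrite (lin0 (hf.1 q)) in h1 h2; split => //; rewrite h2 /gs.
by rewrite (lin0 (hg.1 q)) ent_zero.
Qed.
Lemma gWZ q a u : D q -> W s q u -> W s q (a *: u) /\ phi s q (a *: u) = a * phi s q u.
Proof.
move=> Dq Wu; have [G2 _ _] := gsd; have [W0 p0] := gW0 Dq.
by have := G2 q Dq a u 0 Wu W0; rewrite !addr0 p0 addr0.
Qed.
Lemma gWB q u v : D q -> W s q u -> W s q v ->
  W s q (u - v) /\ phi s q (u - v) = phi s q u - phi s q v.
Proof.
move=> Dq Wu Wv; have [G2 _ _] := gsd.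
have [h1 h2] := gWZ (-1) Dq Wv.
have := G2 q Dq 1 u _ Wu h1; rewrite scale1r mul1r h2 scaleN1r mulN1r.
by [].
Qed.
End GoodFacts.

Section Ext.
Variables (s : st) (gsd : good s) (p : pt) (Dp : D p) (b : pV B p).
Definition bq q : pV B q := pm B p q b.
Definition Tex := exists q, [/\ D q, ple p q & W s q (bq q)].
Definition tval : k := match pselect Tex with
  | left h => phi s (projT1 (cid h)) (bq _) | right _ => 0 end.

Lemma bq_comp q r : ple p q -> ple q r -> pm B q r (bq q) = bq r.
Proof. by move=> h1 h2; have [_ _ Bc] := pB; rewrite /bq -Bc. Qed.

Lemma tvalE q : D q -> ple p q -> W s q (bq q) -> tval = phi s q (bq q).
Proof.
move=> Dq hpq Wq; rewrite /tval; case: pselect => [h|[]]; last by exists q.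
case: (cid h) => q' [Dq' hpq' Wq'] /=.
have [_ dir] := uD; have [z [Dz hqz hq'z]] := dir q q' Dq Dq'.
have [_ _ G4] := gsd.
have [_ e1] := G4 q z Dz hqz _ Wq; have [_ e2] := G4 q' z Dz hq'z _ Wq'.
by rewrite -e2 -e1 !bq_comp.
Qed.

Definition Rep q (u : pV B q) := D q /\ ple p q /\
  exists wc : pV B q * k, W s q wc.1 /\ u = wc.1 + wc.2 *: bq q.
Arguments Rep : clear implicits.
Definition W' q (u : pV B q) := W s q u \/ Rep q u.
Arguments W' : clear implicits.
Definition phi' q (u : pV B q) : k := match pselect (Rep q u) with
  | left h => phi s q (projT1 (cid h.2.2)).1 + (projT1 (cid h.2.2)).2 * tval
  | right _ => phi s q u end.
Arguments phi' : clear implicits.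

Lemma phi'E q w c : D q -> ple p q -> W s q w ->
  phi' q (w + c *: bq q) = phi s q w + c * tval.
Proof.
move=> Dq hpq Ww; rewrite /phi'; case: pselect => [h|[]]; last first.
  by split => //; split => //; exists (w, c).
case: (cid h.2.2) => -[w' c'] [/= Ww' e] /=.
have [ec|nec] := eqVneq c c'.
  by move: e; rewrite ec => /addIr ->.
have e2 : (c' - c) *: bq q = w - w'.
  have -> : w = w' + c' *: bq q - c *: bq q by rewrite -e addrK.
  by rewrite scalerBl [RHS]addrAC [w' + _]addrC addrK.
have [Wd pd] := gWB gsd Dq Ww Ww'.
have cn : c' - c != 0 by rewrite subr_eq0 eq_sym.
have Wb : W s q (bq q).
  have := (gWZ gsd (c' - c)^-1 Dq Wd).1.
  by rewrite -e2 scalerA mulVf // scale1r.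
have := (gWZ gsd (c' - c) Dq Wb).2; rewrite e2 pd -(tvalE Dq hpq Wb) => h3.
have : phi s q w' = phi s q w - (c' - c) * tval by rewrite -h3; ring.
by move=> ->; ring.
Qed.

Lemma phi'E0 q u : W s q u -> phi' q u = phi s q u.
Proof.
move=> Wu; have [[Dq hpq]|nin] := pselect (D q /\ ple p q).
  by have := phi'E 0 Dq hpq Wu; rewrite scale0r addr0 mul0r addr0.
rewrite /phi'; case: pselect => // h; case: nin; split; [exact: h.1|exact: h.2.1].
Qed.

Lemma out_W' q u : ~ (D q /\ ple p q) -> W' q u -> W s q u.
Proof. by move=> nin [//|[Dq [hpq _]]]; case: nin. Qed.

Lemma W'_rep q u : D q -> ple p q -> W' q u ->
  exists wc : pV B q * k, W s q wc.1 /\ u = wc.1 + wc.2 *: bq q.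
Proof.
move=> Dq hpq [Wu|[_ [_ h]]] //.
by exists (u, 0); rewrite /= scale0r addr0.
Qed.

Lemma good' : good (St W' phi').
Proof.
have [G2 G3 G4] := gsd.
split => /=.
- move=> q Dq a u v Wu Wv.
  have [hpq|nhpq] := pselect (ple p q); last first.
    have nin : ~ (D q /\ ple p q) by case.
    have Wu' := out_W' nin Wu; have Wv' := out_W' nin Wv.
    have [h1 h2] := G2 q Dq a u v Wu' Wv'.
    by split; [left|rewrite !phi'E0].
  have [[w1 c1] [/= W1 ->]] := W'_rep Dq hpq Wu.
  have [[w2 c2] [/= W2 ->]] := W'_rep Dq hpq Wv.
  have [h1 h2] := G2 q Dq a w1 w2 W1 W2.
  have -> : a *: (w1 + c1 *: bq q) + (w2 + c2 *: bq q) =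
            (a *: w1 + w2) + (a * c1 + c2) *: bq q.
    by rewrite scalerDr scalerA scalerDl addrACA.
  split; first by right; split => //; split => //; exists (a *: w1 + w2, a * c1 + c2).
  by rewrite !phi'E // h2; ring.
- by move=> q a Dq; have [h1 h2] := G3 q a Dq; split; [left|rewrite phi'E0].
move=> q r Dr hqr u [Wu|[Dq [hpq [[w c] [/= Ww ->]]]]].
  have [h1 h2] := G4 q r Dr hqr u Wu.
  by split; [left|rewrite !phi'E0].
have [Bl _ _] := pB.
have hpr := ple_trans hpq hqr.
rewrite (linD (Bl _ _ hqr)) (linZ (Bl _ _ hqr)) bq_comp //.
have [h1 h2] := G4 q r Dr hqr w Ww.
split; first by right; split => //; split => //; exists (pm B q r w, c).
by rewrite !phi'E // h2.
Qed.

Lemma ext_b : W' p b.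
Proof.
right; split => //; split; first exact: ple_refl.
exists (0, 1) => /=; split; first exact: (gW0 gsd Dp).1.
by have [_ Bid _] := pB; rewrite add0r scale1r /bq Bid.
Qed.

Lemma ext_rel : forall q u, W s q u -> W' q u /\ phi' q u = phi s q u.
Proof. by move=> q u Wu; split; [left|rewrite phi'E0]. Qed.
End Ext.

Lemma max_full (m : ST) : (forall s, Rel m s -> Rel s m) ->
  forall p, D p -> forall b, W (sval m) p b.
Proof.
move=> hm p Dp b.
pose s' : ST := exist _ _ (good' (svalP m) b).
have r1 : Rel m s' by apply/asboolP => q u Wu; exact: (ext_rel (svalP m) b Wu).
have /asboolP h := hm s' r1.
by have [] := h p b (ext_b (svalP m) Dp b).
Qed.
Lemma ext_exists : exists h : Defs.hom B (indicator k D), is_hom h /\ heq (hcomp h f) g.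
Proof.
have [m hm] := exists_max; have [G2 G3 G4] := svalP m.
have full := max_full hm.
exists (fun p u => mk _ (phi (sval m) p u)); split; first split.
- move=> p a u v; have [Dp|nDp] := pselect (D p); last by apply: rVF; apply: asboolF.
  by rewrite (G2 p Dp a u v (full _ Dp _) (full _ Dp _)).2 mkL.
- move=> p q hpq u; have [Dq|nDq] := pselect (D q); last by apply: rVF; apply: asboolF.
  have Dp := dD Dq hpq.
  by rewrite ind_pmE (mkKT _ (asboolT Dp)) (G4 p q Dq hpq u (full _ Dp _)).2.
move=> p a; rewrite /hcomp; have [Dp|nDp] := pselect (D p); last by apply: rVF; apply: asboolF.
by rewrite (G3 p a Dp).2 /gs entK.
Qed.
End Inj.

Lemma ind_injective (R : realType) (n : nat) (k : fieldType) (D : set 'rV[R]_n) :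
  downset D -> updirected D -> injective_obj (indicator k D).
Proof.
move=> dD uD A B f g oA oB hf mf hg.
have finj := inj_of_mono oA.1 oB.1 hf mf.
exact: (ext_exists dD uD oB.1 hf hg finj).
Qed.
Section SubL.
Variables (k : fieldType) (V : lmodType k) (S : set V) (S0 : S 0)
  (SL : forall a u v, S u -> S v -> S (a *: u + v)).
Arguments SL : clear implicits.
Definition subT := {x : V | `[< S x >]}.
HB.instance Definition _ := Choice.on subT.
Lemma SD u v : S u -> S v -> S (u + v). Proof. by move=> hu hv; have := SL 1 u v hu hv; rewrite scale1r. Qed.
Lemma SZ a u : S u -> S (a *: u). Proof. by move=> hu; have := SL a u 0 hu S0; rewrite addr0. Qed.
Lemma SN u : S u -> S (- u). Proof. by move=> hu; have := SZ (-1) hu; rewrite scaleN1r. Qed.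
Definition s0 : subT := exist _ 0 (asboolT S0).
Definition sadd (u v : subT) : subT := exist _ (sval u + sval v) (asboolT (SD (asboolW (svalP u)) (asboolW (svalP v)))).
Definition sopp (u : subT) : subT := exist _ (- sval u) (asboolT (SN (asboolW (svalP u)))).
Definition sscale a (u : subT) : subT := exist _ (a *: sval u) (asboolT (SZ a (asboolW (svalP u)))).
Lemma sv_inj (u v : subT) : sval u = sval v -> u = v.
Proof. by case: u v => [x px] [y py] /= e; move: px py; rewrite e => px py; rewrite (bool_irrelevance px py). Qed.
Lemma saddA : associative sadd. Proof. by move=> u v w; apply: sv_inj; rewrite /= addrA. Qed.
Lemma saddC : commutative sadd. Proof. by move=> u v; apply: sv_inj; rewrite /= addrC. Qed.
Lemma sadd0 : left_id s0 sadd. Proof. by move=> u; apply: sv_inj; rewrite /= add0r. Qed.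
Lemma saddN : left_inverse s0 sopp sadd. Proof. by move=> u; apply: sv_inj; rewrite /= addNr. Qed.
HB.instance Definition _ := GRing.isZmodule.Build subT saddA saddC sadd0 saddN.
Lemma sscaleA a b u : sscale a (sscale b u) = sscale (a * b) u.
Proof. by apply: sv_inj; rewrite /= scalerA. Qed.
Lemma sscale1 : left_id 1 sscale. Proof. by move=> u; apply: sv_inj; rewrite /= scale1r. Qed.
Lemma sscaleDr : right_distributive sscale +%R. Proof. by move=> a u v; apply: sv_inj; rewrite /= scalerDr. Qed.
Lemma sscaleDl v : {morph sscale^~ v: a b / a + b}. Proof. by move=> a b; apply: sv_inj; rewrite /= scalerDl. Qed.
HB.instance Definition _ := GRing.Zmodule_isLmodule.Build k subT sscaleA sscale1 sscaleDr sscaleDl.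
Definition subL : lmodType k := subT.
Lemma sval_lin a (u v : subL) : sval (a *: u + v) = a *: sval u + sval v.
Proof. by []. Qed.
End SubL.
Lemma sval0 (k : fieldType) (V : lmodType k) S S0 SL : sval (0 : @subL k V S S0 SL) = 0.
Proof. by []. Qed.

Section SubPmod.
Variables (R : realType) (n : nat) (k : fieldType).
Local Notation pt := 'rV[R]_n.
Local Notation pmod := (pmod R n k).
Implicit Types x y z p q : pt.
Variables (M : pmod) (pM : is_pmod M) (S : forall p, set (pV M p)).
Arguments S : clear implicits.
Hypotheses (S0 : forall p, S p 0)
  (SL : forall p a u v, S p u -> S p v -> S p (a *: u + v))
  (Sm : forall p q, ple p q -> forall u, S p u -> S q (pm M p q u)).
Arguments SL : clear implicits. Arguments Sm : clear implicits.

Definition sV p : lmodType k := @subL k (pV M p) (S p) (S0 p) (SL p).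
Definition smap p q (u : sV p) : sV q :=
  match pselect (ple p q) with
  | left h => exist _ (pm M p q (sval u)) (asboolT (Sm p q h _ (asboolW (svalP u))))
  | right _ => 0 end.
Lemma smapE p q (u : sV p) : ple p q -> sval (smap q u) = pm M p q (sval u).
Proof. by move=> h; rewrite /smap; case: pselect. Qed.

Definition Subm : pmod := @PMod R n k sV smap.

Lemma Subm_pmod : is_pmod Subm.
Proof.
have [Ml Mid Mc] := pM; split.
- move=> p q h a u v; apply: sv_inj.
  by rewrite /= !smapE //= Ml.
- by move=> p v; apply: sv_inj; rewrite /= smapE ?Mid //; apply: ple_refl.
move=> p q r h1 h2 v; apply: sv_inj; rewrite /= !smapE //; last exact: ple_trans h1 h2.
exact: Mc.
Qed.

Lemma Subm_usc : usc M ->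
  (forall p v, (forall x, pll p x -> S x (pm M p x v)) -> S p v) -> usc Subm.
Proof.
move=> uM Sc p m hm.
have hm' : forall x y, pll p x -> ple x y -> pm M x y (sval (m x)) = sval (m y).
  by move=> x y px hxy; rewrite -(hm x y px hxy) /= smapE.
have [[v hv] uniq] := uM p (fun x => sval (m x)) hm'.
have Sv : S p v by apply: Sc => x px; rewrite hv //; apply: asboolW (svalP (m x)).
split.
  exists (exist _ v (asboolT Sv)) => x px; apply: sv_inj.
  by rewrite /= smapE ?hv //; apply: pll_ple.
move=> a b ha hb; apply: sv_inj; apply: uniq => x px.
  by rewrite -(ha x px) /= smapE //; apply: pll_ple.
by rewrite -(hb x px) /= smapE //; apply: pll_ple.
Qed.

Definition incl : Defs.hom Subm M := fun p u => sval u.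
Lemma incl_hom : is_hom incl.
Proof. by split => // p q h v; rewrite /incl /= smapE. Qed.
End SubPmod.
Section IdemSplit.
Variables (R : realType) (n : nat) (k : fieldType).
Local Notation pt := 'rV[R]_n.
Local Notation pmod := (pmod R n k).
Implicit Types x y z p q : pt.

Lemma usc_uniq (M : pmod) p (u v : pV M p) : is_pmod M -> usc M ->
  (forall x, pll p x -> pm M p x u = pm M p x v) -> u = v.
Proof.
move=> [_ _ Mc] uM h.
have [_ uq] := uM p (fun x => pm M p x v) (fun x y px hxy => esym (Mc _ _ _ (pll_ple px) hxy v)).
by apply: uq => x px //; rewrite h.
Qed.

Lemma indec_idem (M : pmod) : obj M -> indecomposable M -> idem_trivial M.
Proof.
move=> [pM uM] [_ hind] e he ee.
have [el en] := he.
have [Ml Mid Mc] := pM.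
have E : forall p (u : pV M p), e p (e p u) = e p u := ee.
pose S1 p (u : pV M p) := e p u = u.
pose S2 p (u : pV M p) := e p u = 0.
have S10 : forall p, S1 p 0 by move=> p; rewrite /S1 (lin0 (el p)).
have S20 : forall p, S2 p 0 by move=> p; rewrite /S2 (lin0 (el p)).
have S1L : forall p a u v, S1 p u -> S1 p v -> S1 p (a *: u + v).
  by move=> p a u v; rewrite /S1 el => -> ->.
have S2L : forall p a u v, S2 p u -> S2 p v -> S2 p (a *: u + v).
  by move=> p a u v; rewrite /S2 el => -> ->; rewrite scaler0 addr0.
have S1m : forall p q, ple p q -> forall u, S1 p u -> S1 q (pm M p q u).
  by move=> p q h u; rewrite /S1 en // => ->.
have S2m : forall p q, ple p q -> forall u, S2 p u -> S2 q (pm M p q u).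
  by move=> p q h u; rewrite /S2 en // => ->; rewrite (lin0 (Ml _ _ h)).
have S1c : forall p v, (forall x, pll p x -> S1 x (pm M p x v)) -> S1 p v.
  move=> p v h; apply: (usc_uniq pM uM) => x px.
  by rewrite -en ?h //; apply: pll_ple.
have S2c : forall p v, (forall x, pll p x -> S2 x (pm M p x v)) -> S2 p v.
  move=> p v h; apply: (usc_uniq pM uM) => x px.
  by rewrite -en ?h ?(lin0 (Ml _ _ (pll_ple px))) //; apply: pll_ple.
set M1 := Subm S10 S1L S1m; set M2 := Subm S20 S2L S2m.
have o1 : obj M1 by split; [apply: Subm_pmod|apply: Subm_usc].
have o2 : obj M2 by split; [apply: Subm_pmod|apply: Subm_usc].
pose p1 : Defs.hom M M1 := fun p u => exist _ (e p u) (asboolT (E p u)).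
have hS2 : forall p (u : pV M p), S2 p (u - e p u).
  by move=> p u; rewrite /S2 (linB (el p)) E subrr.
pose p2 : Defs.hom M M2 := fun p u => exist _ (u - e p u) (asboolT (hS2 p u)).
have [|A0|B0] := hind M1 M2 o1 o2.
- exists (incl (S0:=S10) (SL:=S1L) (Sm:=S1m)), (incl (S0:=S20) (SL:=S2L) (Sm:=S2m)), p1, p2; split; first split.
  + exact: incl_hom.
  + exact: incl_hom.
  + split; first by move=> p a u v; apply: sv_inj; rewrite /= el.
    by move=> p q h v; apply: sv_inj; rewrite /= smapE //= en.
  + split; first by move=> p a u v; apply: sv_inj; rewrite /= el scalerBr opprD addrACA.
    by move=> p q h v; apply: sv_inj; rewrite /= smapE //= (linB (Ml _ _ h)) en.
  split.
  + by move=> p u; apply: sv_inj; rewrite /= /incl (asboolW (svalP u)).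
  + by move=> p u; apply: sv_inj; rewrite /= /incl (asboolW (svalP u)) subr0.
  + by move=> p u; apply: sv_inj; rewrite /= /incl (asboolW (svalP u)).
  + by move=> p u; apply: sv_inj; rewrite /= /incl (asboolW (svalP u)) subrr.
  by move=> p u; rewrite /hadd /hcomp /incl /= addrC subrK.
- left => p u; have := A0 p (p1 p u).
  by move=> /(congr1 (fun w => sval w)).
right => p u; have := B0 p (p2 p u).
move=> /(congr1 (fun w => sval w)) /= /eqP; rewrite subr_eq0 => /eqP.
by [].
Qed.
End IdemSplit.
Section ZornFam.
Variables (X : Type) (F : X -> Type).
Definition fam := forall x, set (F x).
Definition fsub (L1 L2 : fam) := forall x u, L1 x u -> L2 x u.
Definition funion (C : set fam) : fam := fun x u => exists L, C L /\ L x u.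
Arguments funion C _ _.

Lemma zorn_fam (P : fam -> Prop) (L0 : fam) : P L0 ->
  (forall C : set fam, C `<=` P -> (exists L, C L) ->
     (forall L1 L2, C L1 -> C L2 -> fsub L1 L2 \/ fsub L2 L1) -> P (funion C)) ->
  exists E, P E /\ forall L, P L -> fsub E L -> fsub L E.
Proof.
move=> P0 hC.
pose T := {L : fam | P L}.
pose Rl (s t : T) : bool := `[< fsub (sval s) (sval t) >].
have [||C totC|m hm] := @ZL_preorder T (exist _ L0 P0) Rl.
- by move=> s; apply/asboolP => x u.
- by move=> r s t /asboolP h1 /asboolP h2; apply/asboolP => x u /h1 /h2.
- have [[s0 Cs0]|nC] := pselect (exists s, C s); last first.
    by exists (exist _ L0 P0) => s Cs; case: nC; exists s.
  pose C' := [set sval s | s in C].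
  have PU : P (funion C').
    apply: hC.
    - by move=> _ [s _ <-]; apply: svalP.
    - by exists (sval s0); exists s0.
    move=> _ _ [s1 C1 <-] [s2 C2 <-].
    by have [/asboolP h|/asboolP h] := totC s1 s2 C1 C2; [left|right].
  exists (exist _ _ PU) => s Cs; apply/asboolP => x u h.
  by exists (sval s); split => //; exists s.
exists (sval m); split; first exact: svalP.
by move=> L PL hsub; have /asboolP := hm (exist _ L PL) (asboolT hsub).
Qed.
End ZornFam.
Arguments funion {X F} C _ _.
Section SubFam.
Variables (R : realType) (n : nat) (k : fieldType).
Local Notation pt := 'rV[R]_n.
Local Notation pmod := (pmod R n k).
Implicit Types x y z p q : pt.
Variables (M : pmod) (pM : is_pmod M) (uM : usc M).

Definition Fm (p : pt) : Type := pV M p.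
Local Notation sfam := (fam Fm).

Definition issub (L : sfam) :=
  [/\ forall p, L p (0 : pV M p),
      forall p a (u v : pV M p), L p u -> L p v -> L p (a *: u + v) &
      forall p q, ple p q -> forall u : pV M p, L p u -> L q (pm M p q u)].

Section Facts.
Variable L : sfam. Arguments L : clear implicits.
Hypothesis hL : issub L.
Lemma subZ p a (u : pV M p) : L p u -> L p (a *: u).
Proof. by case: hL => h0 hl _ hu; have := hl p a u 0 hu (h0 p); rewrite addr0. Qed.
Lemma subD p (u v : pV M p) : L p u -> L p v -> L p (u + v).
Proof. by case: hL => _ hl _ hu hv; have := hl p 1 u v hu hv; rewrite scale1r. Qed.
Lemma subN p (u : pV M p) : L p u -> L p (- u).
Proof. by move=> hu; have := subZ (-1) hu; rewrite scaleN1r. Qed.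
Lemma subB p (u v : pV M p) : L p u -> L p v -> L p (u - v).
Proof. by move=> hu hv; apply: subD => //; apply: subN. Qed.
Lemma subM p q (u : pV M p) : ple p q -> L p u -> L q (pm M p q u).
Proof. by move=> h hu; case: hL => _ _ hm; exact: (hm p q h u hu). Qed.
Lemma sub0 p : L p 0. Proof. by case: hL. Qed.
End Facts.

Definition cyc p0 (x : pV M p0) : sfam := fun q w =>
  w = 0 \/ (ple p0 q /\ exists c, w = c *: pm M p0 q x).
Arguments cyc [p0] x _ _.

Lemma cyc_in p0 (x : pV M p0) q c : ple p0 q -> cyc x q (c *: pm M p0 q x).
Proof. by move=> h; right; split => //; exists c. Qed.

Lemma cyc_self p0 (x : pV M p0) : cyc x p0 x.
Proof.
have [_ Mid _] := pM; right; split; first exact: ple_refl.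
by exists 1; rewrite scale1r Mid.
Qed.

Lemma cyc_sub p0 (x : pV M p0) : issub (cyc x).
Proof.
have [Ml Mid Mc] := pM.
have cE : forall q w, ple p0 q -> cyc x q w -> exists c, w = c *: pm M p0 q x.
  by move=> q w h [->|[_ //]]; exists 0; rewrite scale0r.
split.
- by move=> p; left.
- move=> q a u v hu hv.
  have [hq|nq] := pselect (ple p0 q); last first.
    by case: hu => [->|[//]]; case: hv => [->|[//]]; left; rewrite scaler0 addr0.
  have [c1 ->] := cE _ _ hq hu; have [c2 ->] := cE _ _ hq hv.
  by right; split => //; exists (a * c1 + c2); rewrite scalerA scalerDl.
move=> q r hqr u [->|[hq [c ->]]]; first by left; rewrite (lin0 (Ml _ _ hqr)).
by right; split; [exact: ple_trans hq hqr|exists c; rewrite (linZ (Ml _ _ hqr)) -Mc].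
Qed.

Definition fsum (L1 L2 : sfam) : sfam := fun p u =>
  exists e d, [/\ L1 p e, L2 p d & u = e + d].
Arguments fsum L1 L2 _ _.

Lemma fsum_sub L1 L2 : issub L1 -> issub L2 -> issub (fsum L1 L2).
Proof.
move=> h1 h2; have [Ml _ _] := pM; split.
- by move=> p; exists 0, 0; split; rewrite ?addr0 //; apply: sub0.
- move=> p a u v [e1 [z1 [E1 Z1 ->]]] [e2 [z2 [E2 Z2 ->]]].
  exists (a *: e1 + e2), (a *: z1 + z2); split.
  + by case: h1 => _ hl _; apply: hl.
  + by case: h2 => _ hl _; apply: hl.
  by rewrite scalerDr addrACA.
move=> p q h u [e [z [E1 Z1 ->]]]; exists (pm M p q e), (pm M p q z); split.
+ exact: subM.
+ exact: subM.
by rewrite (linD (Ml _ _ h)).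
Qed.

Lemma fsum_l L1 L2 : issub L2 -> fsub L1 (fsum L1 L2).
Proof. by move=> h2 p u hu; exists u, 0; split; rewrite ?addr0 //; apply: sub0. Qed.
Lemma fsum_r L1 L2 : issub L1 -> fsub L2 (fsum L1 L2).
Proof. by move=> h1 p u hu; exists 0, u; split; rewrite ?add0r //; apply: sub0. Qed.

Definition disj (L1 L2 : sfam) := forall p u, L1 p u -> L2 p u -> u = 0.

Definition cl (L : sfam) : sfam := fun p v => forall x, pll p x -> L x (pm M p x v).
Arguments cl L _ _.

Lemma cl_sub L : issub L -> issub (cl L).
Proof.
move=> hL; have [Ml Mid Mc] := pM; split.
- by move=> p x px; rewrite (lin0 (Ml _ _ (pll_ple px))); apply: sub0.
- move=> p a u v hu hv x px; rewrite (Ml _ _ (pll_ple px)).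
  by case: hL => _ hl _; apply: hl; [apply: hu|apply: hv].
move=> p q hpq u hu x qx; rewrite -Mc //; last exact: pll_ple.
by apply: hu; apply: ple_pll_trans qx.
Qed.

Lemma sub_cl L : issub L -> fsub L (cl L).
Proof. by move=> hL p u hu x px; apply: subM => //; apply: pll_ple. Qed.

Lemma union_sub (C : set sfam) : C `<=` issub -> (exists L, C L) ->
  (forall L1 L2, C L1 -> C L2 -> fsub L1 L2 \/ fsub L2 L1) -> issub (funion C).
Proof.
move=> CS [L0 CL0] tot; split.
- by move=> p; exists L0; split => //; apply: sub0; apply: CS.
- move=> p a u v [L1 [C1 h1]] [L2 [C2 h2]].
  have [s12|s21] := tot L1 L2 C1 C2.
    exists L2; split => //; case: (CS _ C2) => _ hl _; apply: hl => //; exact: s12.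
  exists L1; split => //; case: (CS _ C1) => _ hl _; apply: hl => //; exact: s21.
move=> p q h u [L [CL hu]]; exists L; split => //; apply: subM => //; exact: CS.
Qed.

Lemma usc_nz p (v : pV M p) : v != 0 -> exists x, pll p x /\ pm M p x v != 0.
Proof.
move=> nz; apply: contrapT => h; move/eqP: nz; apply.
apply: (usc_uniq pM uM) => x px; have [Ml _ _] := pM.
rewrite (lin0 (Ml _ _ (pll_ple px))); apply: contrapT => h2; apply: h; exists x.
by split => //; apply/eqP.
Qed.
End SubFam.
Arguments cyc {R n k M p0} x _ _.
Arguments cl {R n k M} L _ _.
Arguments fsum {R n k M} L1 L2 _ _.
Section Unif.
Variables (R : realType) (n : nat) (k : fieldType).
Local Notation pt := 'rV[R]_n.
Local Notation pmod := (pmod R n k).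
Implicit Types x y p q : pt.
Variables (M : pmod) (pM : is_pmod M) (uM : usc M).
Hypotheses (injM : injective_obj M) (indM : indecomposable M).
Local Notation sfam := (fam (Fm M)).
Variables (p1 : pt) (a : pV M p1) (p2 : pt) (b : pV M p2).
Hypotheses (a0 : a != 0) (b0 : b != 0) (hdisj : disj (cyc a) (cyc b)).

Local Notation N1 := (cyc a).
Local Notation N2 := (cyc b).

Definition meets (N : sfam) p (u : pV M p) :=
  exists q c, [/\ ple p q, c *: pm M p q u != 0 & N q (c *: pm M p q u)].

Definition Ess (L : sfam) :=
  [/\ issub L, fsub N1 L & forall p (u : pV M p), L p u -> u != 0 -> meets N1 u].

Lemma Ess_N1 : Ess N1.
Proof.
have [_ Mid _] := pM.
split; [exact: cyc_sub|by []|].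
move=> p u hu nz; exists p, 1; rewrite scale1r Mid; split => //; exact: ple_refl.
Qed.

Lemma exE : exists E, Ess E /\ forall L, Ess L -> fsub E L -> fsub L E.
Proof.
apply: (zorn_fam Ess_N1) => C CE nC tot; split.
- by apply: union_sub => // L /CE [].
- by have [L0 CL0] := nC => p u hu; exists L0; split => //; case: (CE _ CL0) => _ h _; apply: h.
by move=> p u [L [CL hu]] nz; case: (CE _ CL) => _ _ h; apply: h.
Qed.

Variable E : sfam. Arguments E : clear implicits.
Hypothesis EE : Ess E.
Hypothesis Emax : forall L, Ess L -> fsub E L -> fsub L E.

Lemma sE : issub E. Proof. by case: EE. Qed.
Lemma N1E : fsub N1 E. Proof. by case: EE. Qed.

Lemma meets_pm p x (u : pV M p) : ple p x -> meets N1 (pm M p x u) -> meets N1 u.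
Proof.
move=> hpx [q [c [hxq nz hN]]]; have [_ _ Mc] := pM.
exists q, c; rewrite -Mc // in nz hN; split => //; exact: ple_trans hpx hxq.
Qed.

Lemma E_closed : fsub (cl E) E.
Proof.
apply: Emax; last exact: (@sub_cl _ _ _ M E sE).
split; [exact: cl_sub sE| |].
  by move=> p u /N1E; apply: (@sub_cl _ _ _ M E sE).
move=> p v hv nz; have [x [px nzx]] := usc_nz pM uM nz.
have [_ _ h] := EE; have := h _ _ (hv x px) nzx.
by apply: meets_pm; apply: pll_ple.
Qed.

Lemma disj_EN2 : disj E N2.
Proof.
move=> p u hE hN; apply: contrapT => /eqP nz.
have [_ _ h] := EE; have [q [c [hpq nz2 hN1]]] := h _ _ hE nz.
have hN2 : N2 q (c *: pm M p q u) by apply: subZ; [exact: cyc_sub|apply: subM => //; exact: cyc_sub].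
by move/eqP: nz2; apply; apply: hdisj.
Qed.

Definition Kf (L : sfam) := [/\ issub L, fsub N2 L & disj L E].

Lemma exK : exists K, Kf K /\ forall L, Kf L -> fsub K L -> fsub L K.
Proof.
have K0 : Kf N2.
  split; [exact: cyc_sub|by []|].
  by move=> p u h1 h2; apply: disj_EN2.
apply: (zorn_fam K0) => C CK nC tot; split.
- by apply: union_sub => // L /CK [].
- by have [L0 CL0] := nC => p u hu; exists L0; split => //; case: (CK _ CL0) => _ h _; apply: h.
by move=> p u [L [CL hu]] hE; case: (CK _ CL) => _ _ h; apply: h.
Qed.

Variable K : sfam. Arguments K : clear implicits.
Hypothesis KK : Kf K.
Hypothesis Kmax : forall L, Kf L -> fsub K L -> fsub L K.
Lemma sK : issub K. Proof. by case: KK. Qed.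
Lemma N2K : fsub N2 K. Proof. by case: KK. Qed.
Lemma dKE : disj K E. Proof. by case: KK. Qed.

Lemma K_closed : fsub (cl K) K.
Proof.
apply: Kmax; last exact: (@sub_cl _ _ _ M K sK).
split; [exact: cl_sub sK| |].
  by move=> p u /N2K; apply: (@sub_cl _ _ _ M K sK).
move=> p v hv hE; apply: (usc_uniq pM uM) => x px.
have [Ml _ _] := pM; rewrite (lin0 (Ml _ _ (pll_ple px))).
apply: dKE; first exact: hv.
by apply: subM => //; [exact: sE|exact: pll_ple].
Qed.

Lemma decomp_uniq p (e1 e2 d1 d2 : pV M p) : E p e1 -> E p e2 -> K p d1 -> K p d2 ->
  e1 + d1 = e2 + d2 -> e1 = e2.
Proof.
move=> E1 E2 D1 D2 h.
have : e1 - e2 = d2 - d1.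
  have -> : e1 = e2 + (d2 - d1) by rewrite addrA -h addrK.
  by rewrite addrC addKr.
move=> h2; have hz : e1 - e2 = 0.
  apply: dKE; last by apply: subB => //; exact: sE.
  by rewrite h2; apply: subB => //; exact: sK.
by apply/eqP; rewrite -subr_eq0; apply/eqP.
Qed.
Local Notation S := (fsum E K).

Definition comp p (u : pV M p) : pV M p :=
  match pselect (S p u) with left h => projT1 (cid h) | right _ => 0 end.

Lemma compP p (u : pV M p) : S p u -> E p (comp u) /\ K p (u - comp u).
Proof.
move=> h; rewrite /comp; case: pselect => [h'|//].
case: (cid h') => e /= [d [Ee Kd ->]]; split => //.
by rewrite addrC addKr.
Qed.

Lemma compE p (e d : pV M p) : E p e -> K p d -> comp (e + d) = e.
Proof.
move=> Ee Kd; have Su : S p (e + d) by exists e, d.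
have [h1 h2] := compP Su.
by apply: (decomp_uniq h1 Ee h2 Kd); rewrite addrC subrK.
Qed.

Lemma decompS p (u : pV M p) : S p u -> u = comp u + (u - comp u).
Proof. by move=> _; rewrite addrC subrK. Qed.

Lemma comp_pm p q (u : pV M p) : ple p q -> S p u -> comp (pm M p q u) = pm M p q (comp u).
Proof.
move=> h Su; have [h1 h2] := compP Su; have [Ml _ _] := pM.
rewrite {1}(decompS Su) (linD (Ml _ _ h)) compE //.
  by apply: subM => //; exact: sE.
by apply: subM => //; exact: sK.
Qed.

Lemma compL p c (u v : pV M p) : S p u -> S p v -> comp (c *: u + v) = c *: comp u + comp v.
Proof.
move=> Su Sv; have [e1 d1] := compP Su; have [e2 d2] := compP Sv.
rewrite {1}(decompS Su) {1}(decompS Sv).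
have -> : c *: (comp u + (u - comp u)) + (comp v + (v - comp v)) =
  (c *: comp u + comp v) + (c *: (u - comp u) + (v - comp v)).
  by rewrite scalerDr addrACA.
rewrite compE //.
  by case: sE => _ hl _; apply: hl.
by case: sK => _ hl _; apply: hl.
Qed.

Lemma S_sub : issub S. Proof. exact: (@fsum_sub _ _ _ M pM E K sE sK). Qed.

Lemma S_closed p (v : pV M p) : (forall x, pll p x -> S x (pm M p x v)) -> S p v.
Proof.
move=> hv; have [Ml Mid Mc] := pM.
pose m x := comp (pm M p x v).
have hm : forall x y, pll p x -> ple x y -> pm M x y (m x) = m y.
  move=> x y px hxy; rewrite /m -comp_pm //; last exact: hv.
  by rewrite -Mc //; apply: pll_ple.
have [[e he] _] := @uM p m hm.
have Ee : E p e.
  apply: E_closed => x px; rewrite he //; exact: (compP (hv x px)).1.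
have Kd : K p (v - e).
  apply: K_closed => x px; rewrite (linB (Ml _ _ (pll_ple px))) he //.
  exact: (compP (hv x px)).2.
by exists e, (v - e); split => //; rewrite addrC subrK.
Qed.

Section WithSub.
Variables (S0 : forall p, S p 0)
  (SL : forall p c (u v : pV M p), S p u -> S p v -> S p (c *: u + v))
  (Sm : forall p q, ple p q -> forall u : pV M p, S p u -> S q (pm M p q u)).
Arguments S0 : clear implicits. Arguments SL : clear implicits. Arguments Sm : clear implicits.

Definition MS := Subm S0 SL Sm.
Lemma MS_obj : obj MS.
Proof. by split; [apply: Subm_pmod|apply: Subm_usc => //; apply: S_closed]. Qed.

Definition gS : Defs.hom MS M := fun p u => comp (sval u).
Lemma gS_hom : is_hom gS.
Proof.
split.
  move=> p c u v; rewrite /gS /=; apply: compL; [exact: asboolW (svalP u)|exact: asboolW (svalP v)].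
by move=> p q h u; rewrite /gS smapE // comp_pm //; exact: asboolW (svalP u).
Qed.

Lemma incl_mono : mono (incl (S0:=S0) (SL:=SL) (Sm:=Sm)).
Proof. by apply: mono_of_inj => p u w; apply: sv_inj. Qed.

Lemma ex_psi : exists psi : Defs.hom M M, is_hom psi /\
  forall p (e d : pV M p), E p e -> K p d -> psi p (e + d) = e.
Proof.
have [psi [hpsi hh]] := injM MS_obj (conj pM uM) (incl_hom S0 SL Sm) incl_mono gS_hom.
exists psi; split => // p e d Ee Kd.
have Sed : S p (e + d) by exists e, d.
have := hh p (exist _ (e + d) (asboolT Sed)); rewrite /hcomp /incl /gS /=.
by move=> ->; rewrite compE.
Qed.
End WithSub.

Lemma meets_scale p q (u : pV M p) c : ple p q -> meets N1 (c *: pm M p q u) -> meets N1 u.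
Proof.
move=> hpq [q' [c' [hqq' nz hN]]]; have [Ml _ Mc] := pM.
rewrite (linZ (Ml _ _ hqq')) -Mc // scalerA in nz hN.
exists q', (c' * c); split => //; exact: ple_trans hpq hqq'.
Qed.

Lemma contra : False.
Proof.
have [S0 SL Sm] := S_sub.
have [psi [hpsi psiE]] := ex_psi S0 SL Sm.
have [pl pn] := hpsi.
have [Ml Mid Mc] := pM.
have psi_e : forall p (e : pV M p), E p e -> psi p e = e.
  by move=> p e Ee; have := psiE p e 0 Ee (sub0 sK p); rewrite addr0.
have psi_d : forall p (d : pV M p), K p d -> psi p d = 0.
  by move=> p d Kd; have := psiE p 0 d (sub0 sE p) Kd; rewrite add0r.
pose L : sfam := fun p u => exists w : pV M p, u = psi p w.
have sL : issub L.
  split.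
  - by move=> p; exists 0; rewrite (lin0 (pl p)).
  - by move=> p c u v [x ->] [y ->]; exists (c *: x + y); rewrite pl.
  by move=> p q h u [x ->]; exists (pm M p q x); rewrite pn.
have imE : fsub L E.
  apply: Emax; last by move=> p u Eu; exists u; rewrite psi_e.
  split => //; first by move=> p u /N1E Eu; exists u; rewrite psi_e.
  move=> p u [x ->] nz.
  have step : exists q c, [/\ ple p q, c *: pm M p q (psi p x) != 0 & E q (c *: pm M p q (psi p x))].
    apply: contrapT => H.
    have H' : forall q c, ple p q -> E q (c *: pm M p q (psi p x)) -> c *: pm M p q (psi p x) = 0.
      move=> q c h Eq; apply: contrapT => /eqP nz2; apply: H; exists q, c; split => //.
    have sC := cyc_sub pM x.
    have KK' : Kf (fsum K (cyc x)).
      split.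
      - exact: (@fsum_sub _ _ _ M pM K (cyc x) sK sC).
      - by move=> q w /N2K; apply: (@fsum_l _ _ _ M K (cyc x) sC).
      move=> q w [d [z [Kd Cz ->]]] Ew.
      have e1 : psi q (d + z) = d + z by apply: psi_e.
      rewrite (linD (pl q)) psi_d // add0r in e1.
      case: Cz e1 Ew => [->|[hpq [c ->]]].
        by rewrite (lin0 (pl q)) addr0 => <-.
      rewrite (linZ (pl q)) pn // => <- Ew.
      by apply: H'.
    have := Kmax KK' (@fsum_l _ _ _ M K (cyc x) sC).
    move=> /(_ p x (@fsum_r _ _ _ M K (cyc x) sK p x (cyc_self pM x))) Kx.
    by move/eqP: nz; apply; apply: psi_d.
  have [q [c [hpq nz2 Eq]]] := step.
  have [_ _ hm] := EE; have := hm _ _ Eq nz2.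
  exact: meets_scale.
have idem : heq (hcomp psi psi) psi.
  by move=> p x; rewrite /hcomp psi_e //; apply: imE; exists x.
have [h0|h1] := indec_idem (conj pM uM) indM hpsi idem.
  have := h0 p1 a; rewrite psi_e; last by apply: N1E; apply: cyc_self.
  by move=> e; move/eqP: a0; apply.
have := h1 p2 b; rewrite psi_d; last by apply: N2K; apply: cyc_self.
by move=> e; move/eqP: b0; apply; exact: (esym e).
Qed.
End Unif.
Lemma uniform (R : realType) (n : nat) (k : fieldType) (M : pmod R n k) :
  obj M -> injective_obj M -> indecomposable M ->
  forall p1 (a : pV M p1) p2 (b : pV M p2), a != 0 -> b != 0 -> ~ disj (cyc a) (cyc b).
Proof.
move=> [pM uM] injM indM p1 a p2 b a0 b0 hd.
have [E [EE Emax]] := exE pM a.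
have [K [KK Kmax]] := exK pM hd EE.
exact: (contra pM uM injM indM a0 b0 EE Emax KK Kmax).
Qed.

Section Part2.
Variables (R : realType) (n : nat) (k : fieldType).
Local Notation pt := 'rV[R]_n.
Local Notation pmod := (pmod R n k).
Implicit Types x y p q : pt.
Variables (M : pmod) (oM : obj M) (injM : injective_obj M) (indM : indecomposable M).
Variables (p0 : pt) (v : pV M p0) (v0 : v != 0).

Definition vq q : pV M q := pm M p0 q v.
Definition Sv : set pt := [set q | ple p0 q /\ vq q != 0].
Definition Dv : set pt := [set y | exists x, Sv x /\ pll y x].

Lemma vq_comp q r : ple p0 q -> ple q r -> pm M q r (vq q) = vq r.
Proof. by move=> h1 h2; have [[_ _ Mc] _] := oM; rewrite /vq -Mc. Qed.

Lemma Sv_p0 : Sv p0.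
Proof. by have [[_ Mid _] _] := oM; split; [apply: ple_refl|rewrite /vq Mid]. Qed.

Lemma Sv_dir q1 q2 : Sv q1 -> Sv q2 -> exists r, [/\ Sv r, ple q1 r & ple q2 r].
Proof.
move=> [h1 n1] [h2 n2]; have [[Ml _ _] _] := oM.
have := uniform oM injM indM n1 n2.
move=> H.
apply: contrapT => nex; apply: H => r u c1 c2.
apply: contrapT => /eqP nu.
case: c1 => [e|[hr1 [a1 e1]]]; first by move/eqP: nu; rewrite e.
case: c2 => [e|[hr2 [a2 e2]]]; first by move/eqP: nu; rewrite e.
apply: nex; exists r; split => //; split; first exact: ple_trans h1 hr1.
rewrite -(vq_comp h1 hr1); apply/eqP => z; move: nu; apply/negP; rewrite negbK; apply/eqP.
by rewrite e1 z scaler0.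
Qed.

Lemma Dv_open : open Dv.
Proof.
rewrite openE => y [x [Sx yx]].
have := @open_pll _ _ x; rewrite openE => /(_ y yx) h.
apply: filterS h => z zx; exists x; split => //.
Qed.

Lemma Dv_down : downset Dv.
Proof. by move=> y z [x [Sx yx]] zy; exists x; split => //; apply: ple_pll_trans zy yx. Qed.

Lemma Dv_up : updirected Dv.
Proof.
split.
  exists (shift p0 (-1)); exists p0; split; first exact: Sv_p0.
  by move=> i; rewrite mxE gtrDl ltrN10.
move=> y1 y2 [x1 [S1 h1]] [x2 [S2 h2]].
have [z [Sz hz1 hz2]] := Sv_dir S1 S2.
exists (pmax y1 y2); split; [|exact: pmax_l|exact: pmax_r].
exists z; split => // i; rewrite mxE gt_max.
by rewrite (lt_le_trans (h1 i) (hz1 i)) (lt_le_trans (h2 i) (hz2 i)).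
Qed.

Lemma Sv_Dv q : Sv q -> Dv q.
Proof.
move=> [hq nz]; have [pM uM] := oM.
have [x [qx nzx]] := usc_nz pM uM nz.
exists x; split => //; split; first exact: ple_trans hq (pll_ple qx).
by rewrite -(vq_comp hq (pll_ple qx)).
Qed.

Lemma Dv_Sv q : ple p0 q -> Dv q -> Sv q.
Proof.
move=> hq [x [[hx nzx] qx]]; split => //; have [[Ml _ _] _] := oM.
apply/eqP => z; move/eqP: nzx; apply.
by rewrite -(vq_comp hq (pll_ple qx)) z (lin0 (Ml _ _ (pll_ple qx))).
Qed.

Local Notation Tv := [set q | ple p0 q /\ Dv q].

Definition fT : Defs.hom (indicator k Tv) M := fun q c => @ent k `[< Tv q >] c *: vq q.
Definition gT : Defs.hom (indicator k Tv) (indicator k Dv) :=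
  fun q c => mk _ (@ent k `[< Tv q >] c).
Arguments fT : clear implicits. Arguments gT : clear implicits.

Lemma fT_hom : is_hom fT.
Proof.
have [[Ml _ _] _] := oM; split.
  by move=> q a c d; rewrite /fT entL scalerDl scalerA.
move=> q r hqr c; rewrite /fT ind_pmE mkK.
have [Tq|nTq] := pselect (Tv q); last first.
  by rewrite (@entF _ _ c (asboolF nTq)) if_same !scale0r (lin0 (Ml _ _ hqr)).
have hr : ple p0 r := ple_trans Tq.1 hqr.
rewrite (linZ (Ml _ _ hqr)) vq_comp //; last by case: Tq.
have [Tr|nTr] := pselect (Tv r); first by rewrite (asboolT Tr).
rewrite (asboolF nTr) scale0r.
have nS : ~ Sv r by move=> Sr; apply: nTr; split => //; apply: Sv_Dv.
have -> : vq r = 0 by apply: contrapT => /eqP h; apply: nS.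
by rewrite scaler0.
Qed.

Lemma gT_hom : is_hom gT.
Proof.
split; first by move=> q a c d; rewrite /gT entL mkL.
move=> q r hqr c; rewrite /gT !ind_pmE !mkK.
have [Tq|nTq] := pselect (Tv q); last first.
  by rewrite (@entF _ _ c (asboolF nTq)) !if_same.
rewrite (asboolT Tq.2).
have [Dr|nDr] := pselect (Dv r); last by apply: rVF; apply: asboolF.
have Tr : Tv r by split => //; apply: ple_trans Tq.1 hqr.
by rewrite (asboolT Tr).
Qed.

Lemma fT_mono : mono fT.
Proof.
apply: mono_of_inj => q c d; rewrite /fT.
have [Tq|nTq] := pselect (Tv q); last by move=> _; apply: rVF; apply: asboolF.
have [_ nz] := Dv_Sv Tq.1 Tq.2.
move=> /eqP; rewrite -subr_eq0 -scalerBl scaler_eq0 (negbTE nz) orbF subr_eq0 => /eqP h.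
exact: entT_inj h.
Qed.

Lemma gT_mono : mono gT.
Proof.
apply: mono_of_inj => q c d; rewrite /gT.
have [Tq|nTq] := pselect (Tv q); last by move=> _; apply: rVF; apply: asboolF.
by move=> /(congr1 (@ent k `[< Dv q >])); rewrite !(mkKT _ (asboolT Tq.2)); apply: entT_inj.
Qed.

Lemma part2_iso : iso M (indicator k Dv).
Proof.
have oT : obj (indicator k Tv) := ind_obj_cap k p0 Dv_open Dv_down.
have oD : obj (indicator k Dv) := ind_obj_down k Dv_open Dv_down.
have [G [hG eG]] := @ind_injective _ _ k Dv Dv_down Dv_up _ _ fT gT oT oM fT_hom fT_mono gT_hom.
have [H [hH eH]] := injM oT oD gT_hom gT_mono fT_hom.
have [c hc] := ind_scalar Dv_up Dv_down (hcomp_hom hH hG).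
have Tp0 : Tv p0 by split; [apply: ple_refl|apply: Sv_Dv; apply: Sv_p0].
have c1 : c = 1.
  have := hc p0 (gT p0 (mk _ 1)); rewrite /hcomp.
  have -> : H p0 (gT p0 (mk _ 1)) = fT p0 (mk _ 1) := eH p0 (mk _ 1).
  have -> : G p0 (fT p0 (mk _ 1)) = gT p0 (mk _ 1) := eG p0 (mk _ 1).
  rewrite /gT (mkKT _ (asboolT Tp0)) => /(congr1 (@ent k `[< Dv p0 >])).
  rewrite -mk_scale !(mkKT _ (asboolT Tp0.2)) => h.
  by rewrite -[c]mulr1 -h mulr1.
have GH : forall q (u : pV (indicator k Dv) q), G q (H q u) = u.
  by move=> q u; have := hc q u; rewrite /hcomp c1 scale1r.
have idem : heq (hcomp (hcomp H G) (hcomp H G)) (hcomp H G).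
  by move=> q u; rewrite /hcomp GH.
have [e0|e1] := indec_idem oM indM (hcomp_hom hG hH) idem.
  have := e0 p0 v; rewrite /hcomp.
  have ev : fT p0 (mk _ 1) = v.
    by rewrite /fT (mkKT _ (asboolT Tp0)) scale1r /vq; have [[_ Mid _] _] := oM; rewrite Mid.
  rewrite -{1}ev.
  have -> : G p0 (fT p0 (mk _ 1)) = gT p0 (mk _ 1) := eG p0 (mk _ 1).
  have -> : H p0 (gT p0 (mk _ 1)) = fT p0 (mk _ 1) := eH p0 (mk _ 1).
  by rewrite ev => h; exfalso; move/eqP: v0; apply; exact: h.
by exists G, H; split => // q u; rewrite /hcomp GH.
Qed.
End Part2.

Theorem mainTheorem17 (R : realType) (n : nat) (k : fieldType) :
  (forall D : set 'rV[R]_n,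
     updirected D -> downset D -> open D -> indec_injective (indicator k D)) /\
  (forall M : pmod R n k, indec_injective M ->
     exists D : set 'rV[R]_n,
       [/\ updirected D, downset D, open D & iso M (indicator k D)]) /\
  (forall D1 D2 : set 'rV[R]_n,
     updirected D1 -> downset D1 -> open D1 ->
     updirected D2 -> downset D2 -> open D2 ->
     iso (indicator k D1) (indicator k D2) -> D1 = D2).
Proof.
split.
  move=> D uD dD oD; split.
  - exact: ind_obj_down.
  - exact: ind_injective.
  - exact: ind_indec.
split; last by move=> D1 D2 _ _ _ _ _ _; apply: part3.
move=> M [oM injM indM].
have [nz _] := indM.
have [p0 [v v0]] : exists p0 (v : pV M p0), v != 0.
  apply: contrapT => h; apply: nz => p v; apply: contrapT => hv.
  by apply: h; exists p, v; apply/eqP.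
exists (Dv v); split.
- exact: Dv_up.
- exact: Dv_down.
- exact: Dv_open.
exact: part2_iso.
Qed.
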